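(* Let $N,n,T_h\in\mathbb{Z}_{>0}$, $\varepsilon>0$, for each $i\in\{1,\dots,N\}$ let $A_i,B_i\in\mathbb{R}^{n\times n}$ with $B_i$ invertible, and let $x_1^{\mathsf d},\dots,x_N^{\mathsf d}\in\mathbb{R}^n$. Consider the discrete-time system on $(x,\beta)\in\mathbb{R}^{nN}\times\mathbb{R}_{>0}^N$, \[ x(k+1)=f_1(x(k),\beta(k)),\qquad \beta(k+1)=f_2(x(k),\beta(k)), \] where, writing $x=[x_1;\dots;x_N]$, \[ \tilde P(x,\beta):=\big(\tfrac1N1_N\oslash[K(x)\beta]\big)^{\mathrm{diag}}K(x)\,\beta^{\mathrm{diag}}, \] $f_1(x,\beta)$ is the vector whose $i$-th block ($i=1,\dots,N$) is $\bar A_ix_i+(I_n-\bar A_i)\,N\sum_{j=1}^N\tilde P_{ij}(x,\beta)\,x_j^{\mathsf d}$, and \[ f_2(x,\beta):=\tfrac1N1_N\oslash\Big[K(f_1(x,\beta))^\top\big(\tfrac1N1_N\oslash[K(x)\beta]\big)\Big]. \] Then this system has at least one equilibrium point $(x^{\mathsf e},\beta^{\mathsf e})\in\mathbb{R}^{nN}\times(\mathbb{R}_{>0}^N/{\sim})$, i.e. a pair with $f_1(x^{\mathsf e},\beta^{\mathsf e})=x^{\mathsf e}$ and $f_2(x^{\mathsf e},\beta^{\mathsf e})\sim\beta^{\mathsf e}$.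
   Context: Notation: $v^{\mathrm{diag}}$ is the diagonal matrix with diagonal $v$; $\oslash$ is elementwise division of positive vectors; $1_N$ is the all-ones vector; for positive semidefinite $M$, $\|x\|_M=(x^\top Mx)^{1/2}$; for $\beta,\beta'\in\mathbb{R}_{>0}^N$, $\beta\sim\beta'$ iff $\beta=r\beta'$ for some $r>0$, and $\mathbb{R}_{>0}^N/{\sim}$ is the corresponding quotient (the map $f_1$ is invariant and $f_2$ is positively homogeneous in $\beta$, so the system is well defined on the quotient). Definitions: $G_{i,T_h}:=\sum_{k=0}^{T_h-1}A_i^kB_iB_i^\top(A_i^\top)^k$, $\mathcal{G}_i:=(A_i^{T_h})^\top G_{i,T_h}^{-1}A_i^{T_h}$, $\bar A_i:=A_i-B_iB_i^\top(A_i^\top)^{T_h-1}G_{i,T_h}^{-1}A_i^{T_h}$, and $K(x)\in\mathbb{R}_{>0}^{N\times N}$ has entries $K_{ij}(x)=\exp\!\big(-\|x_i-x_j^{\mathsf d}\|_{\mathcal{G}_i}^2/\varepsilon\big)$. This system is the closed loop of Sinkhorn MPC with energy cost and the barycentric target $x_{\rm tmp}^{\mathsf d,i}(P)=N\sum_jP_{ij}x_j^{\mathsf d}$. *)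

(* Defs.v *)
From HB Require Import structures.
From mathcomp Require Import all_boot all_order all_algebra.
From mathcomp Require Import all_classical all_reals all_analysis.
Set Implicit Arguments. Unset Strict Implicit. Unset Printing Implicit Defensive.
Import Order.TTheory GRing.Theory Num.Theory.
Local Open Scope ring_scope.

Section SinkhornMPC.
Variable R : realType.

Definition mxpow (m : nat) (M : 'M[R]_m) (k : nat) : 'M[R]_m :=
  iter k (mulmx M) 1%:M.

Definition gram (m Th : nat) (A B : 'M[R]_m) : 'M[R]_m :=
  \sum_(k < Th) (mxpow A k *m B *m B^T *m mxpow A^T k).

Definition calG (m Th : nat) (A B : 'M[R]_m) : 'M[R]_m :=
  (mxpow A Th)^T *m invmx (gram Th A B) *m mxpow A Th.

Definition Abar (m Th : nat) (A B : 'M[R]_m) : 'M[R]_m :=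
  A - B *m B^T *m mxpow A^T Th.-1 *m invmx (gram Th A B) *m mxpow A Th.

Definition qnorm2 (m : nat) (M : 'M[R]_m) (v : 'cV[R]_m) : R :=
  (v^T *m M *m v) 0 0.

Variables (N n Th : nat) (eps : R) (A B : 'I_N -> 'M[R]_n)
  (xd : 'I_N -> 'cV[R]_n).

Definition Kmat (x : 'I_N -> 'cV[R]_n) (i j : 'I_N) : R :=
  expR (- (qnorm2 (calG Th (A i) (B i)) (x i - xd j) / eps)).

Definition uvec (x : 'I_N -> 'cV[R]_n) (beta : 'I_N -> R) (i : 'I_N) : R :=
  (N%:R^-1) / (\sum_(j < N) Kmat x i j * beta j).

Definition Ptilde (x : 'I_N -> 'cV[R]_n) (beta : 'I_N -> R) (i j : 'I_N) : R :=
  uvec x beta i * Kmat x i j * beta j.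

Definition f1 (x : 'I_N -> 'cV[R]_n) (beta : 'I_N -> R) (i : 'I_N) : 'cV[R]_n :=
  Abar Th (A i) (B i) *m x i
  + (1%:M - Abar Th (A i) (B i)) *m
      (N%:R *: \sum_(j < N) (Ptilde x beta i j *: xd j)).

Definition f2 (x : 'I_N -> 'cV[R]_n) (beta : 'I_N -> R) (j : 'I_N) : R :=
  (N%:R^-1) / (\sum_(i < N) Kmat (f1 x beta) i j * uvec x beta i).

End SinkhornMPC.

(* Main.v *)
Require Import Defs.
From HB Require Import structures.
From mathcomp Require Import all_boot all_order all_algebra.
From mathcomp Require Import all_classical all_reals all_analysis.
From mathcomp Require Import ring lra.
Import Order.TTheory GRing.Theory Num.Theory.
Import numFieldNormedType.Exports.
Set Implicit Arguments. Unset Strict Implicit. Unset Printing Implicit Defensive.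
Local Open Scope ring_scope.
Section H.
Variable R : realType.
Definition hh (x : R) : R := x * ln x.

Lemma hh_le0 (y : R) : y <= 0 -> hh y = 0.
Proof. by move=> y0; rewrite /hh ln0 // mulr0. Qed.

Lemma hh_cont : continuous hh.
Proof.
move=> x; case: (ltrgtP x 0) => [xn|xp|->].
- apply: (near_cst_continuous 0).
  by near=> y; apply: hh_le0; apply: ltW; near: y; exact: lt_nbhsl.
- apply: continuousM; first exact: cvg_id.
  exact: continuous_ln.
- apply/cvgrPdist_lt => e e0.
  have d0 : 0 < expR (- (2 / e)) by exact: expR_gt0.
  near=> y.
  have yd : y < expR (- (2 / e)).
    by near: y; exact: lt_nbhsl.
  rewrite /hh mul0r sub0r normrN.
  have [yn|yp] := lerP y 0; first by rewrite ln0 // mulr0 normr0.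
  set z := - ln y.
  have yE : y = (expR z)^-1 by rewrite /z -expRN opprK lnK.
  have lz : 2 / e < z.
    rewrite /z ltrNr -[X in _ < X](expRK) ltr_ln ?posrE //.
  have ez : 1 + z ^+ 2 / 2 <= expR z.
    have := @expR_ge1Dxn R z 1%N; rewrite /= => H; apply: H.
    by apply: ltW; apply: lt_trans lz; rewrite divr_gt0.
  have -> : y * ln y = - (y * z) by rewrite /z mulrN opprK.
  have yz0 : 0 <= y * z.
    by rewrite mulr_ge0 // ?ltW // (lt_trans _ lz) // divr_gt0.
  rewrite normrN ger0_norm // yE mulrC ltr_pdivrMr ?expR_gt0 //.
  have ez2 : 2 < e * z by move: lz; rewrite ltr_pdivrMr // mulrC.
  have z0 : 0 < z by rewrite (lt_trans _ lz) // divr_gt0.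
  nra.
Unshelve. all: by end_near.
Qed.
End H.
Arguments hh {R}.
Section H1.
Variable R : realType.


Lemma ln_le_sub1 (z : R) : 0 < z -> ln z <= z - 1.
Proof.
move=> z0; have := expR_ge1Dx (ln z); rewrite lnK ?posrE //.
by rewrite lerBrDl addrC.
Qed.

Lemma hh_bound (p t : R) : 0 <= p -> 0 <= p + t -> p + t <= 1 ->
  hh (p + t) - hh p <= t * (ln p + 1) + t ^+ 2 / p.
Proof.
move=> p0 y0 y1; rewrite /hh.
have [pe|pp] := eqVneq p 0.
  subst p.
  rewrite !add0r (ln0 (lexx 0)) invr0 mulr0 subr0 add0r mulr1 mulr0 addr0.
  rewrite add0r in y0 y1.
  apply: (@le_trans _ _ 0) => //.
  have [->|tp] := eqVneq t 0; first by rewrite mul0r.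
  by rewrite mulr_ge0_le0 // ln_le0.
have p0' : 0 < p by rewrite lt_def pp.
have [y00|yp] := eqVneq (p + t) 0.
  have -> : t = - p by apply/eqP; rewrite -addr_eq0 addrC y00.
  rewrite addrN mul0r sub0r.
  rewrite [X in _ <= X](_ : _ = -(p * ln p)) //.
  by field.
have y0' : 0 < p + t by rewrite lt_def yp.
set y := p + t.
have ht : t = y - p by rewrite /y addrC addKr.
rewrite ht.
have : ln (y / p) <= y / p - 1 by apply: ln_le_sub1; exact: divr_gt0.
rewrite ln_div ?posrE // => H.
have H2 : y * (ln y - ln p) <= y * (y / p - 1) by rewrite ler_wpM2l // ltW.
suff : y * ln y - p * ln p - ((y - p) * (ln p + 1) + (y - p) ^+ 2 / p)
   = y * (ln y - ln p) - y * (y / p - 1) by move=> E; rewrite -subr_le0 E subr_le0.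
by field; rewrite pp.
Qed.
End H1.
Section Q.
Variable R : realType.

Lemma qnorm2E m (M : 'M[R]_m) v :
  qnorm2 M v = \sum_a \sum_b v a 0 * M a b * v b 0.
Proof.
rewrite /qnorm2 !mxE exchange_big /=; apply: eq_bigr => b _.
rewrite !mxE mulr_suml; apply: eq_bigr => a _; by rewrite !mxE.
Qed.

Lemma mxpowSr m (M : 'M[R]_m) k : mxpow M k.+1 = mxpow M k *m M.
Proof.
rewrite /mxpow /=; elim: k => [|k IH]; first by rewrite /= mulmx1 mul1mx.
by rewrite /= {1}IH mulmxA.
Qed.

Lemma mxpow_tr m (M : 'M[R]_m) k : mxpow M^T k = (mxpow M k)^T.
Proof.
elim: k => [|k IH]; first by rewrite /mxpow /= trmx1.
by rewrite mxpowSr trmx_mul -IH.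
Qed.

Lemma sq_ge0 m (u : 'cV[R]_m) : 0 <= (u^T *m u) 0 0.
Proof.
rewrite !mxE; apply: sumr_ge0 => i _; rewrite !mxE -expr2; exact: sqr_ge0.
Qed.

Lemma qnorm2_gram_ge0 m Th (A B : 'M[R]_m) z : 0 <= qnorm2 (gram Th A B) z.
Proof.
rewrite /qnorm2 /gram mulmx_sumr mulmx_suml summxE; apply: sumr_ge0 => k _.
have -> : z^T *m (mxpow A k *m B *m B^T *m mxpow A^T k) *m z
   = ((mxpow A k *m B)^T *m z)^T *m ((mxpow A k *m B)^T *m z).
  by rewrite [(_ *m z)^T]trmx_mul trmxK mxpow_tr !trmx_mul !mulmxA.
exact: sq_ge0.
Qed.

Lemma qnorm2_inv_ge0 m Th (A B : 'M[R]_m) y :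
  0 <= qnorm2 (invmx (gram Th A B)) y.
Proof.
have [Gu|Gn] := boolP (gram Th A B \in unitmx); last first.
  by rewrite invmx_out //; exact: qnorm2_gram_ge0.
rewrite /qnorm2.
have yE : y = gram Th A B *m (invmx (gram Th A B) *m y) by rewrite mulKVmx.
move: (invmx (gram Th A B) *m y) yE => z ->.
rewrite -mulmxA (mulmxA (invmx _)) mulVmx // mul1mx trmx_mul.
have -> : (z^T *m (gram Th A B)^T *m z) 0 0 = ((z^T *m (gram Th A B)^T *m z)^T) 0 0.
  by rewrite [RHS]mxE.
rewrite !trmx_mul !trmxK mulmxA; exact: qnorm2_gram_ge0.
Qed.

Lemma qnorm2_calG_ge0 m Th (A B : 'M[R]_m) v : 0 <= qnorm2 (calG Th A B) v.
Proof.
have -> : qnorm2 (calG Th A B) v = qnorm2 (invmx (gram Th A B)) (mxpow A Th *m v).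
  by rewrite /qnorm2 /calG trmx_mul !mulmxA.
exact: qnorm2_inv_ge0.
Qed.
End Q.
Section Bil.
Variable R : realType.
Definition bil m (M : 'M[R]_m) (u w : 'cV[R]_m) : R := (u^T *m M *m w) 0 0.

Lemma qnorm2D m (M : 'M[R]_m) u w :
  qnorm2 M (u + w) = qnorm2 M u + qnorm2 M w + bil M u w + bil M w u.
Proof.
have tD : (u + w)^T = u^T + w^T by apply/matrixP => i j; rewrite !mxE.
rewrite /qnorm2 /bil tD !mulmxDl !mulmxDr !mxE.
ring.
Qed.

Lemma bil_sumr m (M : 'M[R]_m) u (I : finType) (a : I -> R) (w : I -> 'cV[R]_m) :
  bil M u (\sum_i (a i *: w i)) = \sum_i a i * bil M u (w i).
Proof.
rewrite /bil mulmx_sumr summxE; apply: eq_bigr => i _.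
by rewrite -scalemxAr mxE.
Qed.

Lemma bil_suml m (M : 'M[R]_m) u (I : finType) (a : I -> R) (w : I -> 'cV[R]_m) :
  bil M (\sum_i (a i *: w i)) u = \sum_i a i * bil M (w i) u.
Proof.
rewrite /bil linear_sum /= !mulmx_suml summxE; apply: eq_bigr => i _.
by rewrite linearZ /= -!scalemxAl mxE.
Qed.

Lemma bil0r m (M : 'M[R]_m) u : bil M u 0 = 0.
Proof. by rewrite /bil mulmx0 mxE. Qed.
Lemma bil0l m (M : 'M[R]_m) u : bil M 0 u = 0.
Proof. by rewrite /bil trmx0 !mul0mx mxE. Qed.
End Bil.

Lemma final_contra (R : realType) (eps D Q L : R) : 0 < eps -> 0 <= D + Q + L - eps ->
  D <= D*D+1 -> L <= -(D*D+1+Q) -> False.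
Proof. move=> *. lra. Qed.

Section Main.
Variables (R : realType) (N n Th : nat) (eps : R) (A B : 'I_N -> 'M[R]_n)
  (xd : 'I_N -> 'cV[R]_n).
Hypothesis N0 : (0 < N)%N.
Hypothesis eps0 : 0 < eps.

Definition GG i := calG Th (A i) (B i).
Definition cc (x : 'I_N -> 'cV[R]_n) i j := qnorm2 (GG i) (x i - xd j).
Definition bar (P : 'M[R]_N) i : 'cV[R]_n := N%:R *: \sum_j (P i j *: xd j).
Definition FF x (P : 'M[R]_N) :=
  \sum_i \sum_j (P i j * cc x i j + eps * hh (P i j)).
Definition coup (P : 'M[R]_N) :=
  [/\ (forall i j, 0 <= P i j), (forall i, \sum_j P i j = N%:R^-1) &
      (forall j, \sum_i P i j = N%:R^-1)].

Lemma Nneq0 : (N%:R : R) != 0.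
Proof. by rewrite pnatr_eq0 -lt0n. Qed.

Lemma sum_w0 (P : 'M[R]_N) i : \sum_j P i j = N%:R^-1 ->
  \sum_j (P i j *: (bar P i - xd j)) = 0.
Proof.
move=> rs.
rewrite (eq_bigr (fun j => P i j *: bar P i - P i j *: xd j)); last first.
  by move=> j _; rewrite scalerBr.
rewrite sumrB -scaler_suml rs /bar scalerA mulVf ?Nneq0 // scale1r subrr.
done.
Qed.

Lemma row_ident (P : 'M[R]_N) i (y : 'cV[R]_n) : \sum_j P i j = N%:R^-1 ->
  \sum_j P i j * qnorm2 (GG i) (y - xd j) =
  \sum_j P i j * qnorm2 (GG i) (bar P i - xd j) + N%:R^-1 * qnorm2 (GG i) (y - bar P i).
Proof.
move=> rs.
have E j : y - xd j = (y - bar P i) + (bar P i - xd j).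
  by rewrite addrA subrK.
under eq_bigr do rewrite E qnorm2D.
have h1 : \sum_j P i j * bil (GG i) (y - bar P i) (bar P i - xd j) = 0.
  by rewrite -bil_sumr sum_w0 // bil0r.
have h2 : \sum_j P i j * bil (GG i) (bar P i - xd j) (y - bar P i) = 0.
  by rewrite -bil_suml sum_w0 // bil0l.
rewrite (eq_bigr (fun j => P i j * qnorm2 (GG i) (y - bar P i)
   + P i j * qnorm2 (GG i) (bar P i - xd j)
   + P i j * bil (GG i) (y - bar P i) (bar P i - xd j)
   + P i j * bil (GG i) (bar P i - xd j) (y - bar P i))); last first.
  by move=> j _; ring.
rewrite !big_split /= h1 h2 !addr0 -mulr_suml rs addrC.
done.
Qed.

Lemma FF_bar (P : 'M[R]_N) x : coup P -> FF (bar P) P <= FF x P.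
Proof.
case=> P0 rs cs; rewrite /FF -subr_ge0 -sumrB; apply: sumr_ge0 => i _.
rewrite -sumrB.
under eq_bigr do rewrite opprD addrACA subrr addr0.
rewrite sumrB /cc row_ident // addrC addKr.
apply: mulr_ge0; first by rewrite invr_ge0.
exact: qnorm2_calG_ge0.
Qed.

Definition Dd x (P E : 'M[R]_N) :=
  \sum_i \sum_j E i j * (cc x i j + eps * (ln (P i j) + 1)).
Definition Qq (P E : 'M[R]_N) := \sum_i \sum_j eps * (E i j ^+ 2 / P i j).
Definition dlt x (P E : 'M[R]_N) t i j :=
  ((P i j + t * E i j) * cc x i j + eps * hh (P i j + t * E i j))
  - (P i j * cc x i j + eps * hh (P i j)).
Definition bnd x (P E : 'M[R]_N) t i j :=
  t * (E i j * (cc x i j + eps * (ln (P i j) + 1))) + t ^+ 2 * (eps * (E i j ^+ 2 / P i j)).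

Lemma pert_sum x (P E : 'M[R]_N) t :
  FF x (P + t *: E) - FF x P - (t * Dd x P E + t ^+ 2 * Qq P E)
  = \sum_i \sum_j (dlt x P E t i j - bnd x P E t i j).
Proof.
rewrite /FF /Dd /Qq /dlt /bnd !mulr_sumr -!sumrB -big_split /= -sumrB.
apply: eq_bigr => i _; rewrite !mulr_sumr -!sumrB -big_split /= -sumrB.
apply: eq_bigr => j _; rewrite !mxE.
ring.
Qed.

Lemma entry_le x (P E : 'M[R]_N) t i j : 0 <= P i j ->
  0 <= P i j + t * E i j -> P i j + t * E i j <= 1 ->
  dlt x P E t i j <= bnd x P E t i j.
Proof.
move=> p0 y0 y1; have := hh_bound p0 y0 y1.
move=> /(ler_wpM2l (ltW eps0)) H.
rewrite /dlt /bnd -subr_le0.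
set a := hh _ in H *; set b := hh _ in H *.
rewrite -subr_le0 in H.
have -> : (P i j + t * E i j) * cc x i j + eps * a - (P i j * cc x i j + eps * b) -
  (t * (E i j * (cc x i j + eps * (ln (P i j) + 1))) + t ^+ 2 * (eps * (E i j ^+ 2 / P i j)))
  = eps * (a - b) - eps * (t * E i j * (ln (P i j) + 1) + (t * E i j) ^+ 2 / P i j).
  by rewrite /a /b; ring.
by rewrite subr_le0 -subr_le0.
Qed.

Lemma pert_bound x (P E : 'M[R]_N) t : (forall i j, 0 <= P i j) ->
  (forall i j, 0 <= P i j + t * E i j <= 1) ->
  FF x (P + t *: E) - FF x P <= t * Dd x P E + t ^+ 2 * Qq P E.
Proof.
move=> P0 H; rewrite -subr_le0 pert_sum; apply: sumr_le0 => i _.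
apply: sumr_le0 => j _; rewrite subr_le0.
by case/andP: (H i j) => h1 h2; apply: entry_le.
Qed.

Definition E4 (i j k l : 'I_N) : 'M[R]_N :=
  delta_mx i j - delta_mx i l - delta_mx k j + delta_mx k l.

Lemma E4E i j k l a b : E4 i j k l a b =
  delta_mx i j a b - delta_mx i l a b - delta_mx k j a b + delta_mx k l a b.
Proof. by rewrite !mxE. Qed.

Lemma delta_row (i j a : 'I_N) : \sum_b (delta_mx i j a b : R) = (a == i)%:R.
Proof.
rewrite (bigD1 j) //= big1 => [|b /negbTE nb]; last by rewrite mxE nb andbF.
by rewrite mxE eqxx andbT addr0.
Qed.

Lemma delta_col (i j b : 'I_N) : \sum_a (delta_mx i j a b : R) = (b == j)%:R.
Proof.
rewrite (bigD1 i) //= big1 => [|a /negbTE na]; last by rewrite mxE na.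
by rewrite mxE eqxx addr0.
Qed.

Lemma delta_sum (i j : 'I_N) (w : 'I_N -> 'I_N -> R) :
  \sum_a \sum_b (delta_mx i j a b * w a b) = w i j.
Proof.
rewrite (bigD1 i) //= [X in _ + X]big1 => [|a /negbTE na]; last first.
  by rewrite big1 // => b _; rewrite mxE na mul0r.
rewrite (bigD1 j) //= big1 => [|b /negbTE nb]; last by rewrite mxE nb andbF mul0r.
by rewrite mxE !eqxx mul1r !addr0.
Qed.

Lemma E4_row i j k l a : \sum_b E4 i j k l a b = 0.
Proof.
under eq_bigr do rewrite E4E.
by rewrite !big_split /= !sumrN !delta_row; ring.
Qed.

Lemma E4_col i j k l b : \sum_a E4 i j k l a b = 0.
Proof.
under eq_bigr do rewrite E4E.
by rewrite !big_split /= !sumrN !delta_col; ring.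
Qed.

Lemma E4_sum i j k l (w : 'I_N -> 'I_N -> R) :
  \sum_a \sum_b (E4 i j k l a b * w a b) = w i j - w i l - w k j + w k l.
Proof.
have H a b : E4 i j k l a b * w a b = delta_mx i j a b * w a b
   - delta_mx i l a b * w a b - delta_mx k j a b * w a b + delta_mx k l a b * w a b.
  by rewrite E4E; ring.
under eq_bigr do under eq_bigr do rewrite H.
under eq_bigr do rewrite !big_split /= !sumrN.
by rewrite !big_split /= !sumrN !delta_sum.
Qed.

Lemma delta01 (i j a b : 'I_N) : 0 <= (delta_mx i j a b : R) <= 1.
Proof. by rewrite mxE; case: ((a == i) && (b == j)) => /=; rewrite ?lexx ?ler01. Qed.

Lemma E4_bound i j k l a b : `|E4 i j k l a b| <= 2.
Proof.
rewrite E4E.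
move: (delta01 i j a b) (delta01 i l a b) (delta01 k j a b) (delta01 k l a b).
move=> /andP[? ?] /andP[? ?] /andP[? ?] /andP[? ?].
rewrite ler_norml; apply/andP; split; lra.
Qed.

Lemma coup_le1 P : coup P -> forall i j, P i j <= 1.
Proof.
case=> P0 rs _ i j.
apply: (@le_trans _ _ (\sum_b P i b)).
  rewrite (bigD1 j) //= lerDl; apply: sumr_ge0 => b _; exact: P0.
rewrite rs invf_le1 ?ler1n ?ltr0n //.
Qed.

Lemma coup_pert P (E : 'M[R]_N) t : coup P -> (forall i, \sum_j E i j = 0) ->
  (forall j, \sum_i E i j = 0) -> (forall i j, 0 <= P i j + t * E i j) ->
  coup (P + t *: E).
Proof.
case=> P0 rs cs Er Ec H; split.
- by move=> i j; rewrite !mxE.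
- move=> i; under eq_bigr do rewrite !mxE.
  by rewrite big_split /= -mulr_sumr Er mulr0 addr0 rs.
- move=> j; under eq_bigr do rewrite !mxE.
  by rewrite big_split /= -mulr_sumr Ec mulr0 addr0 cs.
Qed.

Lemma E4_nonneg i j k l (P : 'M[R]_N) t : i != k -> j != l ->
  (forall a b, 0 <= P a b) -> 0 <= t -> t <= P i l -> t <= P k j ->
  forall a b, 0 <= P a b + t * E4 i j k l a b.
Proof.
move=> ik jl P0 t0 til tkj a b; rewrite E4E !mxE.
have ki : k != i by rewrite eq_sym.
have lj : l != j by rewrite eq_sym.
have := P0 a b.
case: (boolP (a == i)) => [/eqP ->|ai]; case: (boolP (b == j)) => [/eqP ->|bj];
  rewrite ?eqxx ?(negbTE ik) ?(negbTE jl) ?(negbTE ki) ?(negbTE lj) /= => Pab;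
  try (case: (boolP (a == k)) => [/eqP ak|ak]);
  try (case: (boolP (b == l)) => [/eqP bl|bl]);
  rewrite ?eqxx ?(negbTE ik) ?(negbTE jl) ?(negbTE ki) ?(negbTE lj) ?(negbTE ai) ?(negbTE bj) ?(negbTE ak) ?(negbTE bl) /=;
  try subst; try lra.
Qed.

Lemma sum_le_single (g : 'I_N -> 'I_N -> R) i j : (forall a b, g a b <= 0) ->
  \sum_a \sum_b g a b <= g i j.
Proof.
move=> g0; rewrite (bigD1 i) //= -[leRHS]addr0 lerD //; last first.
  by apply: sumr_le0 => a _; apply: sumr_le0 => b _.
rewrite (bigD1 j) //= -[leRHS]addr0 lerD //.
by apply: sumr_le0 => b _.
Qed.

Lemma Qq_ge0 (P E : 'M[R]_N) : (forall a b, 0 <= P a b) -> 0 <= Qq P E.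
Proof.
move=> P0; apply: sumr_ge0 => a _; apply: sumr_ge0 => b _.
apply: mulr_ge0; first exact: ltW.
by apply: divr_ge0 => //; exact: sqr_ge0.
Qed.

Lemma exists_pos_row (P : 'M[R]_N) i : \sum_j P i j = N%:R^-1 -> exists l, 0 < P i l.
Proof.
move=> rs; case: (pselect (exists l, 0 < P i l)) => // H; exfalso.
have : \sum_j P i j <= 0.
  apply: sumr_le0 => l _; rewrite leNgt; apply/negP => h; apply: H; by exists l.
by rewrite rs leNgt invr_gt0 ltr0n N0.
Qed.

Lemma exists_pos_col (P : 'M[R]_N) j : \sum_i P i j = N%:R^-1 -> exists k, 0 < P k j.
Proof.
move=> cs; case: (pselect (exists k, 0 < P k j)) => // H; exfalso.
have : \sum_i P i j <= 0.
  apply: sumr_le0 => l _; rewrite leNgt; apply/negP => h; apply: H; by exists l.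
by rewrite cs leNgt invr_gt0 ltr0n N0.
Qed.

Lemma pos_opt x (P : 'M[R]_N) : coup P -> (forall P', coup P' -> FF x P <= FF x P') ->
  forall i j, 0 < P i j.
Proof.
move=> Hc Hopt i j; case: (Hc) => P0 rs cs.
rewrite lt_def P0 andbT; apply/negP => /eqP Pij.
have [l Pil] := exists_pos_row (rs i).
have [k Pkj] := exists_pos_col (cs j).
have ik : i != k by apply/eqP => ik; move: Pkj; rewrite -ik Pij ltxx.
have jl : j != l by apply/eqP => jl; move: Pil; rewrite -jl Pij ltxx.
set E := E4 i j k l.
set D := Dd x P E; set Q := Qq P E.
have Q0 : 0 <= Q by exact: Qq_ge0.
set t0 := Num.min 1 (Num.min (P i l) (P k j)).
set t := Num.min t0 (expR (- (((D * D + 1) + Q) / eps))).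
have t0p : 0 < t0 by rewrite !lt_min ltr01 Pil Pkj.
have tp : 0 < t by rewrite lt_min t0p expR_gt0.
have tt0 : t <= t0 by rewrite ge_min lexx.
have t1 : t <= 1 by move: tt0; rewrite !le_min => /andP[].
have til : t <= P i l by move: tt0; rewrite !le_min => /and3P[].
have tkj : t <= P k j by move: tt0; rewrite !le_min => /and3P[].
have lnt : ln t <= - (((D * D + 1) + Q) / eps).
  rewrite -[X in _ <= X]expRK ler_ln ?posrE ?expR_gt0 //.
  by rewrite ge_min lexx orbT.
have Hnn := E4_nonneg ik jl P0 (ltW tp) til tkj.
have Hcp : coup (P + t *: E).
  apply: coup_pert => //; [exact: E4_row | exact: E4_col].
have Hle1 := coup_le1 Hcp.
have Eij : E i j = 1.
  rewrite /E E4E !mxE !eqxx (negbTE jl) (negbTE ik) /=; ring.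
have key : FF x (P + t *: E) - FF x P - (t * D + t ^+ 2 * Q) <= eps * (hh t - t).
  rewrite pert_sum.
  have HH : \sum_a \sum_b (dlt x P E t a b - bnd x P E t a b)
      <= dlt x P E t i j - bnd x P E t i j.
    have := @sum_le_single (fun a b => dlt x P E t a b - bnd x P E t a b) i j; apply => a b.
    rewrite subr_le0; apply: entry_le => //; by have := Hle1 a b; rewrite !mxE.
  apply: (le_trans HH).
  rewrite /dlt /bnd Pij Eij (ln0 (lexx 0)) invr0 !mulr0 add0r mulr1 mul0r.
  have -> : hh (0:R) = 0 by rewrite /hh mul0r.
  by rewrite le_eqVlt; apply/orP; left; apply/eqP; ring.
have opt := Hopt _ Hcp.
have : 0 <= t * (D + Q + eps * ln t - eps).
  have h2 : t ^+ 2 * Q <= t * Q.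
    by rewrite expr2 -mulrA ler_piMl // mulr_ge0 // ltW.
  move: key; rewrite /hh; nra.
rewrite pmulr_rge0 // => H.
have : eps * ln t <= - ((D * D + 1) + Q).
  by have := ler_wpM2l (ltW eps0) lnt; rewrite mulrN mulrCA mulfV ?gt_eqF // mulr1.
have : D <= D * D + 1 by nra.
move=> h1 h2; exact: (final_contra eps0 H h1 h2).
Qed.

Lemma single_le_sum (g : 'I_N -> 'I_N -> R) i j : (forall a b, 0 <= g a b) ->
  g i j <= \sum_a \sum_b g a b.
Proof.
move=> g0; rewrite (bigD1 i) //= -[leLHS]addr0 lerD //; last first.
  by apply: sumr_ge0 => a _; apply: sumr_ge0 => b _.
rewrite (bigD1 j) //= -[leLHS]addr0 lerD //.
by apply: sumr_ge0 => b _.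
Qed.

Lemma lin_quad (D Q d : R) : 0 < d -> 0 <= Q ->
  (forall t, `|t| <= d -> 0 <= t * D + t ^+ 2 * Q) -> D = 0.
Proof.
move=> d0 Q0 H; apply/eqP; case: (ltrgtP D 0) => // HD; exfalso.
- set s := Num.min d ((- D) / (Q + 1)).
  have sp : 0 < s by rewrite lt_min d0 divr_gt0 ?oppr_gt0 //; lra.
  have sd : `|s| <= d by rewrite gtr0_norm // ge_min lexx.
  have sD : s * (Q + 1) <= - D.
    by rewrite -ler_pdivlMr ?ge_min ?lexx ?orbT //; lra.
  have := H s sd; rewrite expr2; nra.
- set s := Num.min d (D / (Q + 1)).
  have sp : 0 < s by rewrite lt_min d0 divr_gt0 //; lra.
  have sd : `|- s| <= d by rewrite normrN gtr0_norm // ge_min lexx.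
  have sD : s * (Q + 1) <= D.
    by rewrite -ler_pdivlMr ?ge_min ?lexx ?orbT //; lra.
  have := H (- s) sd; rewrite expr2; nra.
Qed.

Lemma D_zero x (P : 'M[R]_N) : coup P -> (forall P', coup P' -> FF x P <= FF x P') ->
  (forall a b, 0 < P a b) -> forall i j k l, Dd x P (E4 i j k l) = 0.
Proof.
move=> Hc Hopt Pp i j k l; case: (Hc) => P0 rs cs.
set S := \sum_a \sum_b (P a b)^-1.
have S0 : 0 < S.
  apply: (lt_le_trans _ (@single_le_sum (fun a b => (P a b)^-1) i i _)).
    by rewrite invr_gt0.
  by move=> a b; rewrite invr_ge0 ltW.
have m0P a b : S^-1 <= P a b.
  rewrite -[P a b]invrK lef_pV2 ?posrE ?invr_gt0 //.
  by apply: (@single_le_sum (fun a b => (P a b)^-1)) => c e; rewrite invr_ge0 ltW.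
set E := E4 i j k l.
apply: (@lin_quad _ (Qq P E) (S^-1 / 2)).
- by rewrite divr_gt0 // invr_gt0.
- by apply: Qq_ge0 => a b; exact: ltW.
move=> t tb.
have Hnn : forall a b, 0 <= P a b + t * E a b.
  move=> a b; have := E4_bound i j k l a b; rewrite -/E => Eb.
  have : `|t * E a b| <= S^-1.
    rewrite normrM; have := m0P a b.
    have : 0 <= `|t| by [].
    have : 0 <= `|E a b| by [].
    move: tb Eb; set u := `|t|; set v := `|E a b|; set m := S^-1 => h1 h2 h3 h4 h5.
    nra.
  rewrite ler_norml => /andP[h1 _]; have := m0P a b; lra.
have Hcp : coup (P + t *: E).
  apply: coup_pert => //; [exact: E4_row | exact: E4_col].
have Hle1 := coup_le1 Hcp.
have hb : forall a b, 0 <= P a b + t * E a b <= 1.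
  by move=> a b; rewrite Hnn /=; have := Hle1 a b; rewrite !mxE.
have P0' : forall a b, 0 <= P a b by move=> a b; exact: ltW.
apply: le_trans (pert_bound x P0' hb); rewrite subr_ge0; exact: Hopt.
Qed.

Definition KK x i j := Kmat Th eps A B xd x i j.

Lemma KK_gt0 x i j : 0 < KK x i j.
Proof. exact: expR_gt0. Qed.

Lemma lnKK x i j : ln (KK x i j) = - (cc x i j / eps).
Proof. by rewrite /KK /Kmat expRK. Qed.

Definition rr x (P : 'M[R]_N) a b := P a b / KK x a b.

Lemma gibbs x (P : 'M[R]_N) : coup P -> (forall a b, 0 < P a b) ->
  (forall i j k l, Dd x P (E4 i j k l) = 0) ->
  exists beta : 'I_N -> R, (forall j, 0 < beta j) /\
    forall i j, Ptilde Th eps A B xd x beta i j = P i j.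
Proof.
move=> [P0 rs cs] Pp HD.
have rp a b : 0 < rr x P a b by rewrite /rr divr_gt0 // KK_gt0.
have lnr a b : ln (rr x P a b) = ln (P a b) + cc x a b / eps.
  by rewrite /rr ln_div ?posrE ?KK_gt0 // lnKK opprK.
have rel i j k l : rr x P i j * rr x P k l = rr x P i l * rr x P k j.
  have := HD i j k l; rewrite /Dd.
  rewrite (E4_sum i j k l (fun a b => cc x a b + eps * (ln (P a b) + 1))) => h.
  apply: ln_inj; [by rewrite posrE mulr_gt0 | by rewrite posrE mulr_gt0 |].
  rewrite (lnM (rp i j) (rp k l)) (lnM (rp i l) (rp k j)) !lnr.
  have e0 : eps != 0 by rewrite gt_eqF.
  apply: (mulfI e0); rewrite !mulrDr !(mulrC eps (_ / eps)) !divfK //.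
  move: h; set u1 := ln (P i j); set u2 := ln (P i l); set u3 := ln (P k j); set u4 := ln (P k l).
  move=> h; apply/eqP; rewrite -subr_eq0; apply/eqP; rewrite -h; ring.
pose i0 : 'I_N := Ordinal N0.
exists (fun j => rr x P i0 j); split => // i j.
set al := rr x P i i0 / rr x P i0 i0.
have Pe b : P i b = al * KK x i b * rr x P i0 b.
  have := rel i b i0 i0; rewrite /al => h.
  have : P i b = rr x P i b * KK x i b by rewrite /rr divfK // gt_eqF // KK_gt0.
  move=> ->; rewrite -[rr x P i b](mulfK (negbT (gt_eqF (rp i0 i0)))) h.
  by field; rewrite gt_eqF.
have alp : 0 < al by rewrite divr_gt0.
have U : uvec Th eps A B xd x (fun j => rr x P i0 j) i = al.
  rewrite /uvec.
  have : \sum_b KK x i b * rr x P i0 b = N%:R^-1 / al.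
    have hs : \sum_b P i b = al * \sum_b KK x i b * rr x P i0 b.
      by rewrite mulr_sumr; apply: eq_bigr => b _; rewrite Pe mulrA.
    by rewrite -(rs i) hs mulrC mulKf // gt_eqF.
  by rewrite /KK => ->; field; rewrite Nneq0 gt_eqF.
by rewrite /Ptilde U Pe.
Qed.

Lemma fixed_eqs x (P : 'M[R]_N) (beta : 'I_N -> R) : coup P ->
  (forall j, 0 < beta j) -> x = bar P ->
  (forall i j, Ptilde Th eps A B xd x beta i j = P i j) ->
  f1 Th eps A B xd x beta = x /\ forall j, f2 Th eps A B xd x beta j = beta j.
Proof.
move=> [P0 rs cs] bp xE HP.
have F1 : f1 Th eps A B xd x beta = x.
  apply: funext => i; rewrite /f1.
  under eq_bigr do rewrite HP.
  rewrite -/(bar P i) -xE mulmxDl mulNmx mul1mx addrC subrK //.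
split => // j; rewrite /f2 F1.
have -> : \sum_i Kmat Th eps A B xd x i j * uvec Th eps A B xd x beta i
    = (\sum_i P i j) / beta j.
  rewrite mulr_suml; apply: eq_bigr => i _; rewrite -HP /Ptilde.
  by field; rewrite gt_eqF.
rewrite cs; field; by rewrite Nneq0 gt_eqF.
Qed.
End Main.
Local Open Scope classical_set_scope.
Local Open Scope ring_scope.
Section Cont.
Variables (R : realType) (m : nat).
Local Notation V := 'rV[R]_m.

Lemma ct_cst (c : R) : continuous (fun _ : V => c).
Proof. move=> v; exact: cst_continuous. Qed.

Lemma ct_coord k : continuous (fun v : V => v ord0 k).
Proof. exact: coord_continuous. Qed.

Lemma ct_add (f g : V -> R) : continuous f -> continuous g ->
  continuous (fun v => f v + g v).
Proof. move=> cf cg v; exact: (cvgD (cf v) (cg v)). Qed.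

Lemma ct_mul (f g : V -> R) : continuous f -> continuous g ->
  continuous (fun v => f v * g v).
Proof. move=> cf cg v; exact: (cvgM (cf v) (cg v)). Qed.

Lemma ct_opp (f : V -> R) : continuous f -> continuous (fun v => - f v).
Proof. move=> cf v; exact: (cvgN (cf v)). Qed.

Lemma ct_sum (I : Type) (r : seq I) (F : I -> V -> R) :
  (forall i, continuous (F i)) -> continuous (fun v => \sum_(i <- r) F i v).
Proof.
move=> cF; elim: r => [|a r IH].
  under eq_fun do rewrite big_nil; exact: ct_cst.
under eq_fun do rewrite big_cons; exact: ct_add.
Qed.

Lemma ct_hh (f : V -> R) : continuous f -> continuous (fun v => hh (f v)).
Proof. move=> cf v; apply: continuous_comp; [exact: cf | exact: hh_cont]. Qed.
End Cont.

Lemma closed_forall (T : topologicalType) (I : Type) (F : I -> set T) :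
  (forall i, closed (F i)) -> closed [set x : T | forall i, F i x].
Proof.
move=> cF.
have -> : [set x : T | forall i, F i x] = \bigcap_(i in [set: I]) F i.
  by apply/seteqP; split => x /= H i //; apply: H.
exact: closed_bigI.
Qed.

Section Top.
Variables (R : realType) (N n Th : nat) (eps : R) (A B : 'I_N -> 'M[R]_n)
  (xd : 'I_N -> 'cV[R]_n).
Hypothesis N0 : (0 < N)%N.
Hypothesis eps0 : 0 < eps.

Local Notation V := 'rV[R]_(N * N).

Definition Phi (v : V) := FF Th eps A B xd (bar xd (vec_mx v)) (vec_mx v).

Definition pp (v : V) i j := v ord0 (mxvec_index i j).
Definition ww (v : V) i j a :=
  N%:R * (\sum_j' (pp v i j' * xd j' a ord0)) - xd j a ord0.
Definition Phi' (v : V) := \sum_i \sum_j (pp v i j *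
   (\sum_a \sum_b (ww v i j a * GG Th A B i a b * ww v i j b)) + eps * hh (pp v i j)).

Lemma PhiE v : Phi v = Phi' v.
Proof.
rewrite /Phi /Phi' /FF; apply: eq_bigr => i _; apply: eq_bigr => j _.
rewrite /cc qnorm2E !mxE; congr (_ * _ + _).
apply: eq_bigr => a _; apply: eq_bigr => b _.
have wE c : (bar xd (vec_mx v) i - xd j) c 0 = ww v i j c.
  rewrite /bar /ww !mxE summxE; congr (_ * _ - _).
  by apply: eq_bigr => k _; rewrite !mxE.
by rewrite !wE.
Qed.

Lemma Phi_cont : continuous Phi.
Proof.
have -> : Phi = Phi' by apply: funext => v; exact: PhiE.
apply: ct_sum => i; apply: ct_sum => j; apply: ct_add.
  apply: ct_mul; first exact: ct_coord.
  apply: ct_sum => a; apply: ct_sum => b; apply: ct_mul; last first.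
    apply: ct_add; last exact: ct_cst.
    apply: ct_mul; first exact: ct_cst.
    apply: ct_sum => k; apply: ct_mul; [exact: ct_coord | exact: ct_cst].
  apply: ct_mul; last exact: ct_cst.
  apply: ct_add; last exact: ct_cst.
  apply: ct_mul; first exact: ct_cst.
  apply: ct_sum => k; apply: ct_mul; [exact: ct_coord | exact: ct_cst].
apply: ct_mul; first exact: ct_cst.
apply: ct_hh; exact: ct_coord.
Qed.

Definition Sset := [set v : V | coup (vec_mx v)].

Lemma vec_mx_cont i j : continuous (fun v : V => vec_mx v i j).
Proof.
have -> : (fun v : V => vec_mx v i j) = (fun v : V => v ord0 (mxvec_index i j)).
  by apply: funext => v; rewrite mxE.
exact: ct_coord.
Qed.

Lemma closed_pre (f : V -> R) (D : set R) : continuous f -> closed D ->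
  closed [set v | D (f v)].
Proof.
move=> cf cD; apply: (@preimage_closed _ _ f D) => // x _; exact: cf.
Qed.

Lemma Sset_closed : closed Sset.
Proof.
have -> : Sset = [set v : V | forall i, forall j, 0 <= vec_mx v i j] `&`
   [set v : V | forall i, \sum_j vec_mx v i j = N%:R^-1] `&`
   [set v : V | forall j, \sum_i vec_mx v i j = N%:R^-1].
  apply/seteqP; split => v /=.
    by case=> h1 h2 h3; split; first split.
  by case=> -[h1 h2] h3; split.
apply: closedI; first apply: closedI.
- apply: closed_forall => i; apply: closed_forall => j.
  apply: (closed_pre (f := fun v : V => vec_mx v i j) (D := [set x | 0 <= x])).
    exact: vec_mx_cont.
  exact: closed_ge.
- apply: closed_forall => i.
  apply: (closed_pre (f := fun v : V => \sum_j vec_mx v i j) (D := [set x | x = N%:R^-1])).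
    by apply: ct_sum => j; exact: vec_mx_cont.
  exact: closed_eq.
- apply: closed_forall => j.
  apply: (closed_pre (f := fun v : V => \sum_i vec_mx v i j) (D := [set x | x = N%:R^-1])).
    by apply: ct_sum => i; exact: vec_mx_cont.
  exact: closed_eq.
Qed.

Lemma Sset_compact : compact Sset.
Proof.
have Bc := @rV_compact R (N * N) (fun _ => `[(0:R), 1]%classic) (fun _ => @segment_compact R 0 1).
apply: (subclosed_compact Sset_closed Bc).
move=> v Sv k /=; case/mxvec_indexP: k => i j.
have := Sv; case=> P0 _ _.
have := coup_le1 N0 Sv i j; have := P0 i j; rewrite mxE => h1 h2.
by rewrite in_itv /= h1 h2.
Qed.

Lemma Sset_nonempty : Sset !=set0.
Proof.
exists (mxvec (const_mx (N%:R^-1 * N%:R^-1))); rewrite /Sset /= mxvecK.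
have c : \sum_(k < N) (N%:R^-1 * N%:R^-1 : R) = N%:R^-1.
  by rewrite sumr_const card_ord -mulr_natr; field; exact: (Nneq0 R N0).
split.
- by move=> i j; rewrite mxE mulr_ge0 // invr_ge0.
- by move=> i; under eq_bigr do rewrite mxE.
- by move=> j; under eq_bigr do rewrite mxE.
Qed.

Lemma main_ex : exists (xe : 'I_N -> 'cV[R]_n) (be : 'I_N -> R),
    (forall j, 0 < be j) /\
    f1 Th eps A B xd xe be = xe /\
    exists r : R, 0 < r /\ forall j, f2 Th eps A B xd xe be j = r * be j.
Proof.
have [c cS cmin] := compact_EVT_min Sset_nonempty Sset_compact
  (continuous_subspaceT (A := Sset) Phi_cont).
rewrite inE in cS.
set P := vec_mx c.
have Pc : coup P := cS.
set x := bar xd P.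
have Hopt : forall P', coup P' -> FF Th eps A B xd x P <= FF Th eps A B xd x P'.
  move=> P' cP'.
  have := cmin (mxvec P'); rewrite inE /Sset /= mxvecK => /(_ cP').
  rewrite /Phi mxvecK -/P -/x => h; apply: (le_trans h).
  exact: FF_bar.
have Pp := pos_opt N0 eps0 Pc Hopt.
have HD := D_zero N0 eps0 Pc Hopt Pp.
have [beta [bp HP]] := gibbs N0 eps0 Pc Pp HD.
have [F1 F2] := fixed_eqs N0 Pc bp (erefl x) HP.
exists x, beta; split => //; split => //; exists 1; split => // j.
by rewrite mul1r.
Qed.
End Top.

Local Close Scope classical_set_scope.
Unset Implicit Arguments.

Theorem proposition2 (R : realType) (N n Th : nat) (eps : R)
  (A B : 'I_N -> 'M[R]_n) (xd : 'I_N -> 'cV[R]_n) :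
  (0 < N)%N -> (0 < n)%N -> (0 < Th)%N -> 0 < eps ->
  (forall i, B i \in unitmx) ->
  exists (xe : 'I_N -> 'cV[R]_n) (be : 'I_N -> R),
    (forall j, 0 < be j) /\
    f1 Th eps A B xd xe be = xe /\
    exists r : R, 0 < r /\ forall j, f2 Th eps A B xd xe be j = r * be j.
Proof.
move=> N0 _ _ eps0 _.
exact: (main_ex Th A B xd N0 eps0).
Qed.
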